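(* Let $m\ge 2$ and let $X(0),X(1),\dots$ be i.i.d. random vectors in $\mathbb{R}^m$ (on a common probability space) whose components satisfy $X_{\min,i}\le X_i(k)\le X_{\max,i}$ almost surely, where $X_{\max,i}<\infty$ and $X_{\min,i}>-1$, and where at least one component equals a constant $r\ge 0$ almost surely. For $n\ge 1$ let $\mathcal{X}_{n,i}:=\prod_{k=0}^{n-1}(1+X_i(k))-1$, $\mathcal{X}_n=(\mathcal{X}_{n,1},\dots,\mathcal{X}_{n,m})^T$, $\mathcal{K}:=\{K\in\mathbb{R}^m: K_i\ge 0,\ \sum_i K_i=1\}$, and for each $n$ let $K^*_n\in\mathcal{K}$ maximize $g_n(K):=\frac{1}{n}\mathbb{E}[\log(1+K^T\mathcal{X}_n)]$ over $\mathcal{K}$. Then for every $K\in\mathcal{K}$, $$\limsup_{n\to\infty}\frac{1}{n}\log\frac{1+K^T\mathcal{X}_n}{1+{K_n^*}^T\mathcal{X}_n}\le 0\quad\text{almost surely.}$$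
   Context: $X_i(k)$ is the return of asset $i$ at step $k$; components may be arbitrarily correlated; $n$ is the rebalancing period and $K_n^*$ a Kelly optimal feedback gain for that period. *)

(* Defs.v *)
From HB Require Import structures.
From mathcomp Require Import all_boot all_order all_algebra.
From mathcomp Require Import all_classical all_reals all_analysis.
Set Implicit Arguments. Unset Strict Implicit. Unset Printing Implicit Defensive.
Import Order.TTheory GRing.Theory Num.Theory.
Local Open Scope classical_set_scope.
Local Open Scope ring_scope.

(* A sequence of random vectors in R^m is represented componentwise:
   X k i : T -> R is the i-th component of the k-th vector X(k). *)

Definition rect_event {T : Type} {R : realType} {m : nat}
  (Y : 'I_m -> T -> R) (B : 'I_m -> set R) : set T :=
  \bigcap_(i in [set: 'I_m]) (Y i @^-1` B i).

(* Mutual independence of the random vectors X(0), X(1), ...: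
   product rule over every finite subfamily, for measurable rectangles
   (rectangles form a pi-system generating the Borel sets of R^m). *)
Definition vec_independent {d} {T : measurableType d} {R : realType} {m : nat}
  (P : probability T R) (X : nat -> 'I_m -> T -> R) : Prop :=
  forall (S : seq nat) (B : nat -> 'I_m -> set R),
    uniq S -> (forall k i, measurable (B k i)) ->
    P (\bigcap_(k in [set k | k \in S]) rect_event (X k) (B k))
    = (\prod_(k <- S) P (rect_event (X k) (B k)))%E.

(* Identical distribution: every X(k) has the law of X(0)
   (checked on measurable rectangles, which determine the law on R^m). *)
Definition vec_ident_distrib {d} {T : measurableType d} {R : realType} {m : nat}
  (P : probability T R) (X : nat -> 'I_m -> T -> R) : Prop :=
  forall (k : nat) (B : 'I_m -> set R), (forall i, measurable (B i)) ->
    P (rect_event (X k) B) = P (rect_event (X 0%N) B).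

Definition cumret {T : Type} {R : realType} {m : nat}
  (X : nat -> 'I_m -> T -> R) (n : nat) (i : 'I_m) (w : T) : R :=
  \prod_(k < n) (1 + X k i w) - 1.

Definition wealth {T : Type} {R : realType} {m : nat}
  (X : nat -> 'I_m -> T -> R) (n : nat) (K : 'I_m -> R) (w : T) : R :=
  1 + \sum_(i < m) K i * cumret X n i w.

Definition simplexK {R : realType} {m : nat} : set ('I_m -> R) :=
  [set K | (forall i, 0 <= K i) /\ \sum_(i < m) K i = 1].

Definition gn {d} {T : measurableType d} {R : realType} {m : nat}
  (P : probability T R) (X : nat -> 'I_m -> T -> R) (n : nat) (K : 'I_m -> R)
  : \bar R :=
  ((n%:R)^-1)%:E * (\int[P]_w (ln (wealth X n K w))%:E)%E.

(* Main.v *)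
Require Import Defs.
From HB Require Import structures.
From mathcomp Require Import all_boot all_order all_algebra.
From mathcomp Require Import all_classical all_reals all_analysis.
From mathcomp Require Import measurable_realfun.
From mathcomp Require Import ring lra.
Import Order.TTheory GRing.Theory Num.Theory.
Local Open Scope classical_set_scope.
Local Open Scope ring_scope.
Module PA.

Section helpers.
Context {T : Type} {R : realType} {m : nat}.
Implicit Types (X : nat -> 'I_m -> T -> R) (K : 'I_m -> R).

Lemma wealthE X n K w : simplexK K ->
  wealth X n K w = \sum_(i < m) K i * \prod_(k < n) (1 + X k i w).
Proof.
case=> _ K1; rewrite /wealth /cumret.
under eq_bigr do rewrite mulrBr mulr1.
by rewrite sumrB K1 addrC subrK.
Qed.

Lemma wealth_affine X n K K' t w :
  wealth X n (fun i => K' i + t * (K i - K' i)) w =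
  wealth X n K' w + t * (wealth X n K w - wealth X n K' w).
Proof.
rewrite /wealth.
have -> : \sum_(i < m) (K' i + t * (K i - K' i)) * cumret X n i w =
  \sum_(i < m) K' i * cumret X n i w + t * (\sum_(i < m) K i * cumret X n i w
   - \sum_(i < m) K' i * cumret X n i w).
  rewrite -sumrB mulr_sumr -big_split /=; apply: eq_bigr => i _; ring.
ring.
Qed.

Lemma simplex_conv K K' t : simplexK K -> simplexK K' -> 0 <= t <= 1 ->
  simplexK (fun i => K' i + t * (K i - K' i)).
Proof.
move=> [K0 K1] [K'0 K'1] /andP[t0 t1]; split.
  move=> i; have := K0 i; have := K'0 i; nra.
rewrite big_split /= -mulr_sumr sumrB K1 K'1; ring.
Qed.

Lemma wealth_bounds X n K w c C : 0 < c ->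
  (forall k i, (k < n)%N -> c <= 1 + X k i w <= C) -> simplexK K ->
  c ^+ n <= wealth X n K w <= C ^+ n.
Proof.
move=> c0 hb sK; rewrite wealthE //; case: sK => K0 K1.
have hp i : c ^+ n <= \prod_(k < n) (1 + X k i w) <= C ^+ n.
  have -> : c ^+ n = \prod_(k < n) c by rewrite prodr_const card_ord.
  have -> : C ^+ n = \prod_(k < n) C by rewrite prodr_const card_ord.
  apply/andP; split; apply: ler_prod => k _.
    by have /andP[h1 _] := hb k i (ltn_ord k); rewrite (ltW c0) h1.
  have /andP[h1 h2] := hb k i (ltn_ord k).
  by rewrite h2 (le_trans (ltW c0) h1).
have -> : c ^+ n = \sum_(i < m) K i * c ^+ n by rewrite -mulr_suml K1 mul1r.
have -> : C ^+ n = \sum_(i < m) K i * C ^+ n by rewrite -mulr_suml K1 mul1r.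
apply/andP; split; apply: ler_sum => i _.
  by have /andP[h1 _] := hp i; apply: ler_wpM2l.
by have /andP[_ h2] := hp i; apply: ler_wpM2l.
Qed.

End helpers.

End PA.
Import PA.

Module PB.
Set Implicit Arguments. Unset Strict Implicit.

Section Jsec.
Context d (T : measurableType d) (R : realType) (P : probability T R) (N : set T).
Hypotheses (mN : measurable N) (PN : P N = 0%E).

Definition bm (f : T -> R) := measurable_fun setT f /\
  exists M, forall w, ~ N w -> `|f w| <= M.

Lemma mG : measurable (~` N).
Proof. exact: measurableC. Qed.

Lemma PG : P (~` N) = 1%E.
Proof. by rewrite probability_setC // PN sube0. Qed.

Lemma bm_intG f : bm f -> P.-integrable (~` N) (EFin \o f).
Proof.
move=> [mf [M hM]]; apply: measurable_bounded_integrable.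
- exact: mG.
- by apply: (le_lt_trans (probability_le1 _ mG)); rewrite ltry.
- exact: measurable_funS measurableT (@subsetT _ _) mf.
- exists M; split; first exact: num_real.
  by move=> x Mx y Ny; apply: le_trans (hM y Ny) (ltW Mx).
Qed.

Lemma bm_intT f : bm f -> P.-integrable setT (EFin \o f).
Proof.
move=> [mf [M hM]]; apply/integrableP; split; first exact/measurable_EFinP.
apply: (@le_lt_trans _ _ ((`|M|)%:E * P setT)%E).
  apply: integral_le_bound => //; first exact/measurable_EFinP.
  exists N; split => // w /= hw; apply: contrapT => nN; apply: hw => _.
  by rewrite lee_fin (le_trans (hM w nN)) // ler_norm.
by rewrite probability_setT mule1 ltry.
Qed.

Definition J (f : T -> R) : R := fine (\int[P]_(w in ~` N) (f w)%:E).

Lemma JE f : bm f -> (\int[P]_(w in ~` N) (f w)%:E = (J f)%:E)%E.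
Proof.
by move=> bf; rewrite /J fineK //; apply: integrable_fin_num; [exact: mG | exact: bm_intG].
Qed.

Lemma JT f : bm f -> (\int[P]_w (f w)%:E = (J f)%:E)%E.
Proof.
move=> bf; rewrite -JE // (@negligible_integral _ _ _ _ setT N _ mN measurableT (bm_intT bf)) //.
by rewrite setTD.
Qed.

Lemma bmD f g : bm f -> bm g -> bm (fun w => f w + g w).
Proof.
move=> [mf [M hM]] [mg [M' hM']]; split; first exact: measurable_funD.
exists (M + M') => w nN; apply: le_trans (ler_normD _ _) _.
by apply: lerD; [exact: hM | exact: hM'].
Qed.

Lemma bmZ a f : bm f -> bm (fun w => a * f w).
Proof.
move=> [mf [M hM]]; split; first exact: measurable_funM.
exists (`|a| * M) => w nN; rewrite normrM; apply: ler_wpM2l => //.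
exact: hM.
Qed.

Lemma bmcst b : bm (fun _ => b).
Proof. by split; [exact: measurable_cst | exists `|b|]. Qed.

Lemma JD f g : bm f -> bm g -> J (fun w => f w + g w) = J f + J g.
Proof.
move=> bf bg; apply/EFin_inj; rewrite -JE; last exact: bmD.
under eq_integral do rewrite EFinD.
by rewrite (integralD_EFin mG (bm_intG bf) (bm_intG bg)) !JE.
Qed.

Lemma JZ a f : bm f -> J (fun w => a * f w) = a * J f.
Proof.
move=> bf; apply/EFin_inj; rewrite -JE; last exact: bmZ.
under eq_integral do rewrite EFinM.
by rewrite integralZl; [rewrite JE | exact: mG | exact: bm_intG].
Qed.

Lemma Jcst b : J (fun _ => b) = b.
Proof.
apply/EFin_inj; rewrite -JE; last exact: bmcst.
rewrite integral_cst; last exact: mG.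
transitivity (b%:E * 1)%E; last exact: mule1.
by congr (_ * _)%E; exact: PG.
Qed.

Lemma Jle f g : bm f -> bm g -> (forall w, ~ N w -> f w <= g w) -> J f <= J g.
Proof.
move=> bf bg fg; rewrite -lee_fin -!JE //.
apply: le_integral; [exact: mG | exact: bm_intG | exact: bm_intG |].
by move=> w; rewrite inE => /fg; rewrite lee_fin.
Qed.

End Jsec.

End PB.
Import PB.

Module PC.

Lemma conv_bounds (R : realType) (L U a w t : R) : L <= a <= U -> L <= w <= U -> 0 <= t <= 1 ->
  L <= a + t * (w - a) <= U.
Proof. move=> /andP[? ?] /andP[? ?] /andP[? ?]; apply/andP; split; nra. Qed.

Lemma key_ineq (R : realType) (L U a w t : R) : 0 < L -> L <= a <= U -> L <= w <= U -> 0 < t <= 1 ->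
  t * (w / a) - t - t ^+ 2 * (U ^+ 2 / L ^+ 2) <= ln (a + t * (w - a)) - ln a.
Proof.
move=> L0 ha hw ht.
have /andP[hb1 hb2] : L <= a + t * (w - a) <= U.
  by apply: conv_bounds => //; case/andP: ht => ? ?; apply/andP; split => //; exact: ltW.
case/andP: ha => ha1 ha2; case/andP: hw => hw1 hw2; case/andP: ht => ht1 ht2.
set b := a + t * (w - a) in hb1 hb2 *.
have a0 : 0 < a by apply: lt_le_trans ha1.
have b0 : 0 < b by apply: lt_le_trans hb1.
have h1 : ln (a / b) <= a / b - 1.
  have := @le_ln1Dx R (a / b - 1); rewrite addrCA subrr addr0; apply.
  by rewrite ltrBrDl addrN divr_gt0.
have h2 : ln (a / b) = ln a - ln b by rewrite ln_div // posrE.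
have h3 : t * (w / a) - t - t ^+ 2 * ((w - a) ^+ 2 / (a * b)) = 1 - a / b.
  have an : a != 0 by rewrite gt_eqF.
  have bn : b != 0 by rewrite gt_eqF.
  move: bn; rewrite /b => bn; field; apply/andP; split => //.
have h4 : (w - a) ^+ 2 / (a * b) <= U ^+ 2 / L ^+ 2.
  have hD : (w - a) ^+ 2 <= U ^+ 2 by nra.
  have hab : L ^+ 2 <= a * b by nra.
  apply: (@le_trans _ _ ((w - a) ^+ 2 / L ^+ 2)).
    apply: ler_wpM2l; first exact: sqr_ge0.
    by rewrite lef_pV2 ?posrE ?exprn_gt0 ?mulr_gt0.
  by apply: ler_wpM2r => //; rewrite invr_ge0 exprn_ge0 // ltW.
have h5 : t ^+ 2 * ((w - a) ^+ 2 / (a * b)) <= t ^+ 2 * (U ^+ 2 / L ^+ 2).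
  by apply: ler_wpM2l => //; exact: sqr_ge0.
lra.
Qed.

End PC.
Import PC.

Module PD.
Set Implicit Arguments. Unset Strict Implicit.

Section opt.
Context d (T : measurableType d) (R : realType) (P : probability T R) (N : set T).
Hypotheses (mN : measurable N) (PN : P N = 0%E).

Lemma bm_ln (f : T -> R) (L U : R) : 0 < L -> measurable_fun setT f ->
  (forall w, ~ N w -> L <= f w <= U) -> bm N (fun w => ln (f w)).
Proof.
move=> L0 mf hf; split; first by apply: measurableT_comp; [exact: measurable_ln | exact: mf].
exists (`|ln L| + `|ln U|) => w nN; have /andP[h1 h2] := hf w nN.
have f0 : 0 < f w by apply: lt_le_trans h1.
have U0 : 0 < U by apply: lt_le_trans h2.
have l1 : ln L <= ln (f w) by rewrite ler_ln ?posrE.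
have l2 : ln (f w) <= ln U by rewrite ler_ln ?posrE.
have hU := ler_norm (ln U).
have hL := ler_norm (- ln L); rewrite normrN in hL.
have := normr_ge0 (ln U); have := normr_ge0 (ln L).
rewrite ler_norml; move=> ? ?; apply/andP; split; lra.
Qed.

Lemma opt_bound (W V : T -> R) (L U : R) :
  0 < L -> measurable_fun setT W -> measurable_fun setT V ->
  (forall w, ~ N w -> L <= W w <= U /\ L <= V w <= U) ->
  (forall t, 0 < t <= 1 ->
    (\int[P]_w (ln (V w + t * (W w - V w)))%:E <= \int[P]_w (ln (V w))%:E)%E) ->
  (\int[P]_(w in ~` N) (expR (ln (W w) - ln (V w)))%:E <= 1)%E.
Proof.
move=> L0 mW mV hb hopt.
set rho := fun w => expR (ln (W w) - ln (V w)).
have rhoE w : ~ N w -> rho w = W w / V w.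
  move=> nN; have [/andP[h1 _] /andP[h3 _]] := hb w nN.
  rewrite /rho expRB !lnK // posrE; exact: lt_le_trans h1 || exact: lt_le_trans h3.
have bmrho : bm N rho.
  split.
    apply: measurableT_comp; first exact: measurable_expR.
    by apply: measurable_funB; (apply: measurableT_comp; first exact: measurable_ln).
  exists (U / L) => w nN; rewrite rhoE //.
  have [/andP[h1 h2] /andP[h3 h4]] := hb w nN.
  have W0 : 0 < W w by apply: lt_le_trans h1.
  have V0 : 0 < V w by apply: lt_le_trans h3.
  rewrite ger0_norm; last by rewrite divr_ge0 // ltW.
  apply: ler_pM => //; [exact: ltW | by rewrite invr_ge0 ltW |].
  by rewrite lef_pV2 ?posrE.
rewrite (JE P mN bmrho) lee_fin.
set M := U ^+ 2 / L ^+ 2.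
have key t : 0 < t <= 1 -> J P N rho <= 1 + t * M.
  move=> ht.
  have bmV : bm N (fun w => ln (V w)).
    by apply: (bm_ln (L := L) (U := U)) => // w /hb [].
  have bmVt : bm N (fun w => ln (V w + t * (W w - V w))).
    apply: (bm_ln (L := L) (U := U)) => //.
      apply: measurable_funD => //; apply: measurable_funM => //.
      exact: measurable_funB.
    move=> w /hb [h1 h2]; apply: conv_bounds => //.
    by case/andP: ht => ? ?; apply/andP; split => //; exact: ltW.
  have h1 : J P N (fun w => ln (V w + t * (W w - V w))) <= J P N (fun w => ln (V w)).
    by rewrite -lee_fin -!JT //; exact: hopt.
  have h2 : J P N (fun w => t * rho w + (- t - t ^+ 2 * M)) <=
            J P N (fun w => ln (V w + t * (W w - V w)) + (-1) * ln (V w)).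
    apply: Jle => //.
    - by apply: bmD => //; [exact: bmZ | exact: bmcst].
    - by apply: bmD => //; exact: bmZ.
    move=> w nN; rewrite rhoE //; have [hW hV] := hb w nN.
    have := @key_ineq R L U (V w) (W w) t L0 hV hW ht; rewrite /M; lra.
  have e1 : J P N (fun w => t * rho w + (- t - t ^+ 2 * M)) =
      t * J P N rho + (- t - t ^+ 2 * M).
    rewrite (@JD _ _ _ P _ mN (fun w => t * rho w)); last exact: bmcst.
      by rewrite Jcst // JZ.
    exact: bmZ.
  have e2 : J P N (fun w => ln (V w + t * (W w - V w)) + (-1) * ln (V w)) =
      J P N (fun w => ln (V w + t * (W w - V w))) - J P N (fun w => ln (V w)).
    rewrite (@JD _ _ _ P _ mN (fun w => ln (V w + t * (W w - V w)))) //; last exact: bmZ.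
    by rewrite JZ // mulN1r.
  rewrite e1 e2 in h2.
  case/andP: ht => t0 t1.
  have : t * J P N rho <= t * (1 + t * M) by lra.
  by rewrite ler_pM2l.
have M0 : 0 <= M by apply: divr_ge0; exact: sqr_ge0.
rewrite leNgt; apply/negP => hJ.
set e := J P N rho - 1.
have e0 : 0 < e by rewrite /e subr_gt0.
pose t := Num.min 1 (e / (2 * (M + 1))).
have t0 : 0 < t by rewrite lt_min ltr01 divr_gt0 // mulr_gt0 //; lra.
have t1 : t <= 1 by rewrite ge_min lexx.
have t2 : t <= e / (2 * (M + 1)) by rewrite ge_min lexx orbT.
have := key t; rewrite t0 t1 => /(_ isT) hk.
have hM1 : 0 < M + 1 by lra.
have h3 : t * (M + 1) <= e / (2 * (M + 1)) * (M + 1).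
  by apply: ler_wpM2r => //; exact: ltW.
have h4 : e / (2 * (M + 1)) * (M + 1) = e / 2.
  by field; rewrite gt_eqF.
rewrite h4 in h3.
have h5 : t * M <= t * (M + 1) by rewrite ler_pM2l // lerDl.
rewrite /e in hk h3 h5 e0; lra.
Qed.

End opt.

End PD.
Import PD.

Module PE.
Set Implicit Arguments. Unset Strict Implicit.

Lemma mwealth d (T : measurableType d) (R : realType) m (X : nat -> 'I_m -> T -> R) n K :
  (forall k i, measurable_fun setT (X k i)) -> measurable_fun setT (wealth X n K).
Proof.
move=> hX; rewrite /wealth /cumret.
apply: measurable_funD; first exact: measurable_cst.
apply: measurable_sum => i; apply: measurable_funM; first exact: measurable_cst.
apply: measurable_funB; last exact: measurable_cst.
apply: measurable_prod => k _; apply: measurable_funD; first exact: measurable_cst.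
exact: hX.
Qed.

Lemma geo_finite (R : realType) (q : R) : 0 <= q < 1 ->
  (\sum_(n <oo) (q ^+ n)%:E < +oo)%E.
Proof.
move=> /andP[q0 q1].
have hq : `|q| < 1 by rewrite ger0_norm.
have hc := @is_cvg_geometric_series R 1 q hq.
have -> : (fun N => \sum_(0 <= n < N) (q ^+ n)%:E)%E = EFin \o series (geometric 1 q).
  apply/funext => N /=; rewrite sumEFin /series /=; congr (_%:E).
  by apply: eq_bigr => k _; rewrite /geometric mul1r.
by rewrite EFin_lim // ltry.
Qed.

End PE.
Import PE.


Theorem lemma2 (d : measure_display) (T : measurableType d) (R : realType)
  (P : probability T R) (m : nat) (X : nat -> 'I_m -> T -> R)
  (Xmin Xmax : 'I_m -> R) (r : R) (Kstar : nat -> 'I_m -> R) :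
  (2 <= m)%N ->
  (forall k i, measurable_fun setT (X k i)) ->
  vec_independent P X ->
  vec_ident_distrib P X ->
  (forall i, -1 < Xmin i) ->
  (forall k i, {ae P, forall w, Xmin i <= X k i w <= Xmax i}) ->
  0 <= r ->
  (exists i0 : 'I_m, forall k, {ae P, forall w, X k i0 w = r}) ->
  (forall n, (1 <= n)%N ->
     simplexK (Kstar n) /\
     (forall K, simplexK K -> (gn P X n K <= gn P X n (Kstar n))%E)) ->
  forall K : 'I_m -> R, simplexK K ->
    {ae P, forall w,
      (limn_esup (fun n : nat =>
         ((n%:R)^-1 * ln (wealth X n K w / wealth X n (Kstar n) w))%:E)
       <= 0%E)%E}.
Proof.
move=> _ mX _ _ hXmin hXb _ _ hopt K sK.
have hall : {ae P, forall w, forall k (i : 'I_m), Xmin i <= X k i w <= Xmax i}.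
  apply: ae_foralln => k; apply: filter_forall => i; exact: hXb.
have [N [mN PN hN]] := hall.
have hb w : ~ N w -> forall k i, Xmin i <= X k i w <= Xmax i.
  by move=> nN; apply: contrapT => h; apply: nN; apply: hN.
set c := \big[Num.min/1]_(i < m) (1 + Xmin i).
set C := \big[Num.max/1]_(i < m) (1 + Xmax i).
have c0 : 0 < c.
  apply: (big_ind (fun x => 0 < x)) => //.
    by move=> x y; rewrite lt_min => -> ->.
  by move=> i _; have := hXmin i; lra.
have cle i : c <= 1 + Xmin i by exact: bigmin_le_cond.
have Cge i : 1 + Xmax i <= C by exact: le_bigmax_cond.
have hcC w : ~ N w -> forall k i, (k < k.+1)%N -> c <= 1 + X k i w <= C.
  move=> nN k i _; have /andP[h1 h2] := hb w nN k i.
  have := cle i; have := Cge i; move=> ? ?; apply/andP; split; lra.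
have hW w n K' : ~ N w -> simplexK K' -> c ^+ n <= wealth X n K' w <= C ^+ n.
  move=> nN sK'; apply: wealth_bounds => // k i _; exact: hcC.
have mW n K' : measurable_fun setT (wealth X n K') by exact: mwealth.
have hJ n : (1 <= n)%N ->
  (\int[P]_(w in ~` N) (expR (ln (wealth X n K w) - ln (wealth X n (Kstar n) w)))%:E <= 1)%E.
  move=> n1; have [sKs optK] := hopt n n1.
  apply: (opt_bound mN PN (L := c ^+ n) (U := C ^+ n)).
  - exact: exprn_gt0.
  - exact: mW.
  - exact: mW.
  - by move=> w nN; split; apply: hW.
  move=> t /andP[t0 t1].
  have sKt : simplexK (fun i => Kstar n i + t * (K i - Kstar n i)).
    by apply: simplex_conv => //; rewrite (ltW t0) t1.
  have := optK _ sKt; rewrite /gn lee_pmul2l //; last first.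
    by rewrite lte_fin invr_gt0 ltr0n.
  by under eq_integral do rewrite wealth_affine.
pose f n := fun w => (n%:R)^-1 * (ln (wealth X n K w) - ln (wealth X n (Kstar n) w)).
have mf n : measurable_fun setT (f n).
  apply: measurable_funM; first exact: measurable_cst.
  by apply: measurable_funB; (apply: measurableT_comp; [exact: measurable_ln | exact: mW]).
pose A n eps := ~` N `&` [set w | eps < f n w].
have mA n eps : measurable (A n eps).
  apply: measurableI; first exact: measurableC.
  have := mf n measurableT _ (measurable_itv `]eps, +oo[).
  by rewrite setTI preimage_itvoy.
have hPA n eps : (1 <= n)%N -> 0 < eps ->
    (P (A n eps) <= (expR (- (n%:R * eps)))%:E)%E.
  move=> n1 e0.
  set rho := fun w => expR (ln (wealth X n K w) - ln (wealth X n (Kstar n) w)).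
  have mrho : measurable_fun setT rho.
    apply: measurableT_comp; first exact: measurable_expR.
    by apply: measurable_funB; (apply: measurableT_comp; [exact: measurable_ln | exact: mW]).
  have n0 : 0 < n%:R :> R by rewrite ltr0n.
  have h1 : ((expR (n%:R * eps))%:E * P (A n eps) <= 1)%E.
    rewrite -integral_cst; last exact: mA.
    apply: le_trans (hJ n n1).
    apply: (@le_trans _ _ (\int[P]_(w in A n eps) (rho w)%:E)%E).
      apply: ge0_le_integral.
      - exact: mA.
      - by move=> x _; rewrite /= lee_fin expR_ge0.
      - exact: measurable_cst.
      - apply/measurable_EFinP; exact: measurable_funS measurableT (@subsetT _ _) mrho.
      move=> w [nN hw]; rewrite /= lee_fin /rho ler_expR.
      rewrite /f in hw.
      have : n%:R * eps < n%:R * ((n%:R)^-1 *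
          (ln (wealth X n K w) - ln (wealth X n (Kstar n) w))) by rewrite ltr_pM2l.
      by rewrite mulrA mulfV ?gt_eqF // mul1r => /ltW.
    apply: ge0_subset_integral.
    - exact: mA.
    - exact: measurableC.
    - apply/measurable_EFinP; exact: measurable_funS measurableT (@subsetT _ _) mrho.
    - by move=> x _; rewrite lee_fin expR_ge0.
    - by move=> x [].
  have PAfin : P (A n eps) \is a fin_num by rewrite fin_num_measure //; exact: mA.
  move: h1; rewrite -(fineK PAfin) -EFinM !lee_fin expRN => h1.
  have e0' := expR_gt0 (n%:R * eps).
  by rewrite -(ler_pM2l e0') mulfV ?gt_eqF.
pose eps j := ((j.+1)%:R : R)^-1.
pose F j k := A k.+1 (eps j).
have mF j k : measurable (F j k) by exact: mA.
have mlim j : measurable (lim_sup_set (F j)).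
  by apply: bigcap_measurable => // k _; apply: bigcup_measurable => i _.
have hBC j : P (lim_sup_set (F j)) = 0%E.
  have e0 : 0 < eps j by rewrite invr_gt0 ltr0n.
  set q := expR (- eps j).
  have q0 : 0 <= q < 1 by rewrite expR_ge0 expR_lt1 oppr_lt0 e0.
  apply: lim_sup_set_cvg0; first exact: mF.
  apply: le_lt_trans (geo_finite q0).
  apply: lee_nneseries => [i _ _|k _]; first exact: measure_ge0.
  apply: le_trans (hPA k.+1 (eps j) isT e0) _.
  rewrite lee_fin /q -expRM_natl ler_expR mulrN lerN2 ler_pM2r // ler_nat.
  exact: leqnSn.
have ae1 : {ae P, forall w, ~ N w}.
  by exists N; split => // w /= /contrapT.
have ae2 : {ae P, forall w, forall j, ~ lim_sup_set (F j) w}.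
  apply: ae_foralln => j; exists (lim_sup_set (F j)); split => //; first exact: hBC.
  by move=> w /= /contrapT.
move: ae1 ae2; apply: filterS2 => w nN hj.
apply/lee_addgt0Pr => e e0; rewrite add0e.
pose j := Num.truncn (e^-1).
have hje : eps j < e.
  rewrite /eps -[e]invrK ltf_pV2 ?posrE ?invr_gt0 ?ltr0n //.
  exact: truncnS_gt.
have [M hM] : exists M, forall k, (M <= k)%N -> ~ F j k w.
  apply: contrapT => H; apply: (hj j) => n _.
  apply: contrapT => H2; apply: H; exists n => k nk Fk; apply: H2; exists k => //.
apply: (@le_trans _ _ (eps j)%:E); last by rewrite lee_fin ltW.
rewrite limn_esup_lim; apply: lime_le; first exact: is_cvg_esups.
exists M.+1 => // n /= Mn.
apply: ge_ereal_sup => _ [k /= nk <-].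
case: k nk => [|k] nk; first by move: (leq_trans Mn nk).
have hk := hM k (leq_trans Mn nk).
have : ~ (eps j < f k.+1 w) by move=> h; apply: hk; split.
move/negP; rewrite -leNgt => hle.
rewrite lee_fin.
have /andP[h1 _] := hW w k.+1 K nN sK.
have /andP[h2 _] := hW w k.+1 (Kstar k.+1) nN (proj1 (hopt k.+1 isT)).
rewrite ln_div ?posrE //; [exact: lt_le_trans (exprn_gt0 _ c0) h1 | exact: lt_le_trans (exprn_gt0 _ c0) h2].
Qed.
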